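(* For each $2$-cocycle $f = f_1 + f_2 + f_3 \in Z^2(\mathfrak{g},\mathfrak{z})$, there exists a decomposition $f_1 = f_1^0 + f_1^1$ into linear maps $f_1^0, f_1^1 \colon \Lambda^2(A) \otimes S^2(\mathfrak{k}) \to \mathfrak{z}$, where $$ f_1^0(\mathfrak{g},\mathfrak{g}') = \{0\}, \quad \operatorname{im}(\tilde f_1^1) \subseteq \operatorname{Sym}^2(\mathfrak{k},\mathfrak{z})^{\mathfrak{k}} \quad \mbox{ and } \quad T_0(A) \subseteq \ker \tilde f_1^1. $$
   Context: Let $A$ be a unital commutative associative algebra over a field $\mathbb{K}$ with $2 \in \mathbb{K}^\times$, $\mathfrak{k}$ a $\mathbb{K}$-Lie algebra, $\mathfrak{k}' := [\mathfrak{k},\mathfrak{k}]$, and $\mathfrak{g} := A \otimes \mathfrak{k}$ with bracket $[a \otimes x, a' \otimes x'] = aa' \otimes [x,x']$, so $\mathfrak{g}' = A \otimes \mathfrak{k}'$. Let $\mathfrak{z}$ be a vector space, viewed as a trivial $\mathfrak{g}$-module. Write $S^2(A) = (A \vee \mathbf{1}) \oplus I_A$, where $I_A$ is the kernel of the multiplication map $S^2(A) \to A$ and $A$ is identified with $A\vee\mathbf{1}$. There is a linear isomorphism $P=(p_1,p_2,p_3)\colon \Lambda^2(\mathfrak{g}) \to (\Lambda^2(A) \otimes S^2(\mathfrak{k})) \oplus (A \otimes \Lambda^2(\mathfrak{k})) \oplus (I_A \otimes \Lambda^2(\mathfrak{k}))$ with $p_1(ax\wedge by) = a\wedge b \otimes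 x\vee y$, $p_2(ax\wedge by) = ab\otimes x\wedge y$, $p_3(ax\wedge by) = (a\vee b - ab\vee \mathbf{1})\otimes x\wedge y$. Every alternating bilinear map $f\colon \Lambda^2(\mathfrak{g}) \to \mathfrak{z}$ is written $f = f_1\circ p_1 + f_2\circ p_2 + f_3 \circ p_3$ (abbreviated $f = f_1+f_2+f_3$) with linear maps $f_1 \colon \Lambda^2(A)\otimes S^2(\mathfrak{k}) \to \mathfrak{z}$, $f_2\colon A\otimes \Lambda^2(\mathfrak{k})\to\mathfrak{z}$, $f_3 \colon I_A\otimes\Lambda^2(\mathfrak{k})\to\mathfrak{z}$. For such a map $g$ on $\Lambda^2(A)\otimes S^2(\mathfrak{k})$, $\tilde g \colon A\times A \to \operatorname{Sym}^2(\mathfrak{k},\mathfrak{z})$ denotes the alternating map $\tilde g(a,b)(x,y) := g(a\wedge b\otimes x\vee y)$. $\operatorname{Sym}^2(\mathfrak{k},\mathfrak{z})^{\mathfrak{k}}$ is the space of invariant symmetric $\mathfrak{z}$-valued bilinear maps on $\mathfrak{k}$, and $T_0(A) := \operatorname{span}\{ab\wedge c + bc\wedge a + ca\wedge b - abc\wedge \mathbf{1} : a,b,c\in A\} \subseteq \Lambda^2(A)$. The condition $f_1^0(\mathfrak{g},\mathfrak{g}')=\{0\}$ means that $f_1^0\circ p_1$ vanishes on $\mathfrak{g}\times\mathfrak{g}'$. *)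

(* Defs.v *)
From HB Require Import structures.
From mathcomp Require Import all_boot all_order all_algebra.
Set Implicit Arguments. Unset Strict Implicit. Unset Printing Implicit Defensive.
Import GRing.Theory.
Local Open Scope ring_scope.

Section Defs.
Variable K : fieldType.

Definition lin (U V : lmodType K) (f : U -> V) : Prop :=
  forall (c : K) (u v : U), f (c *: u + v) = c *: f u + f v.

Definition is_lie_bracket (k : lmodType K) (br : k -> k -> k) : Prop :=
  [/\ forall y, lin (fun x => br x y),
      forall x, lin (fun y => br x y),
      forall x, br x x = 0 &
      forall x y w, br x (br y w) + br y (br w x) + br w (br x y) = 0].

(* A map  A -> A -> k -> k -> z  that is linear in each argument; such maps
   are exactly the linear maps  A (x) A (x) k (x) k -> z. *)
Definition multilin4 (A B k z : lmodType K) (F : A -> B -> k -> k -> z) : Prop :=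
  [/\ forall b x y, lin (fun a => F a b x y),
      forall a x y, lin (fun b => F a b x y),
      forall a b y, lin (fun x => F a b x y) &
      forall a b x, lin (fun y => F a b x y)].

(* Linear maps  Lambda^2(A) (x) S^2(k) -> z  ( = alternating maps
   A x A -> Sym^2(k,z), i.e. the "tilde" maps of the paper). *)
Definition LS_map (A k z : lmodType K) (G : A -> A -> k -> k -> z) : Prop :=
  [/\ multilin4 G,
      forall a x y, G a a x y = 0 &
      forall a b x y, G a b x y = G a b y x].

(* Linear maps  A (x) Lambda^2(k) -> z. *)
Definition AL_map (A k z : lmodType K) (G : A -> k -> k -> z) : Prop :=
  [/\ forall x y, lin (fun a => G a x y),
      forall a y, lin (fun x => G a x y),
      forall a x, lin (fun y => G a x y) &
      forall a x, G a x x = 0].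

(* Linear maps  S^2(A) (x) Lambda^2(k) -> z.  A linear map
   f3 : I_A (x) Lambda^2(k) -> z is the restriction of such a map H, via
   f3((a \/ b - ab \/ 1) (x) x /\ y) = H a b x y - H (ab) 1 x y. *)
Definition SL_map (A k z : lmodType K) (H : A -> A -> k -> k -> z) : Prop :=
  [/\ multilin4 H,
      forall a b x y, H a b x y = H b a x y &
      forall a b x, H a b x x = 0].

(* f = f1 o p1 + f2 o p2 + f3 o p3 evaluated at (a (x) x, b (x) y) in g = A (x) k. *)
Definition fval (A : comAlgType K) (k z : lmodType K)
  (G1 : A -> A -> k -> k -> z) (G2 : A -> k -> k -> z) (H3 : A -> A -> k -> k -> z)
  (a b : A) (x y : k) : z :=
  G1 a b x y + G2 (a * b) x y + (H3 a b x y - H3 (a * b) 1 x y).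

(* 2-cocycle condition for the trivial module z on g = A (x) k with bracket
   [a x, b y] = ab [x,y]:  f([u,v],w) + f([v,w],u) + f([w,u],v) = 0,
   checked on pure tensors u = a x, v = b y, w = c w' (suffices by
   multilinearity). *)
Definition is_cocycle (A : comAlgType K) (k z : lmodType K) (br : k -> k -> k)
  (f : A -> A -> k -> k -> z) : Prop :=
  forall (a b c : A) (x y w : k),
    f (a * b) c (br x y) w + f (b * c) a (br y w) x + f (c * a) b (br w x) y = 0.

Definition invariant_form (k z : lmodType K) (br : k -> k -> k) (beta : k -> k -> z) : Prop :=
  forall w x y, beta (br w x) y + beta x (br w y) = 0.

End Defs.

(* Main.v *)
Require Import Defs.
From HB Require Import structures.
From mathcomp Require Import all_boot all_order all_algebra.
From mathcomp Require Import boolp classical_sets.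
Import GRing.Theory.
Local Open Scope ring_scope.
Set Implicit Arguments. Unset Strict Implicit.

Lemma complement (K : fieldType) (k : lmodType K) (S : k -> Prop) :
  (forall c s t, S s -> S t -> S (c *: s + t)) -> S 0 ->
  exists pi : k -> k, lin pi /\ (forall s, S s -> pi s = 0) /\ (forall x, S (x - pi x)).
Proof.
move=> Scl S0.
pose P : set (set k) := fun W =>
  (forall c s t, W s -> W t -> W (c *: s + t)) /\ (forall s, W s -> S s -> s = 0).
have [W [[Wcl WS] Wmax]] : exists A, P A /\ forall B, proper A B -> ~ P B.
  apply: Zorn_bigcup => F FP Ftot; split.
    move=> c s t [X FX Xs] [Y FY Yt].
    have [XY|YX] := Ftot X Y FX FY.
      exists Y => //; apply (FP Y FY).1 => //; exact: XY.
    exists X => //; apply (FP X FX).1 => //; exact: YX.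
  by move=> s [X FX Xs]; apply: (FP X FX).2.
pose W0 := fun w => W w \/ w = 0.
have W0cl : forall c s t, W0 s -> W0 t -> W0 (c *: s + t).
  move=> c s t [Ws|->] [Wt|->].
  - by left; apply: Wcl.
  - left; rewrite addr0.
    have W0' : W 0 by have := Wcl (-1) s s Ws Ws; rewrite scaleN1r addNr.
    by have := Wcl c s 0 Ws W0'; rewrite addr0.
  - by rewrite scaler0 add0r; left.
  - by right; rewrite scaler0 addr0.
have W0S : forall s, W0 s -> S s -> s = 0 by move=> s [Ws|->] Ss //; apply: WS.
have dec : forall x, exists w, W0 w /\ S (x - w).
  move=> x; apply: contrapT => H.
  pose B := fun y => exists c w, W0 w /\ y = c *: x + w.
  have hp : proper W B.
    split.
    by move=> y Wy; exists 0, y; split; [left|rewrite scale0r add0r].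
    move=> BW; have : W x by apply: BW; exists 1, 0; split; [right|rewrite scale1r addr0].
    by move=> Wx; apply: H; exists x; split; [left|rewrite subrr].
  apply: (Wmax B hp); split.
    move=> c s t [c1 [w1 [Hw1 ->]]] [c2 [w2 [Hw2 ->]]].
    exists (c * c1 + c2), (c *: w1 + w2); split; first exact: W0cl.
    by rewrite scalerDr scalerA scalerDl addrACA.
  move=> s [c [w [Hw ->]]] Ss.
  have [c0|cn0] := eqVneq c 0.
    move: Ss Hw; rewrite c0 scale0r add0r => Ss Hw; exact: W0S.
  exfalso; apply: H; exists ((- c^-1) *: w + 0); split.
    apply: W0cl => //; by right.
  have -> : x - ((- c^-1) *: w + 0) = c^-1 *: (c *: x + w) + 0.
    by rewrite !addr0 scalerDr scalerA mulVf // scale1r scaleNr opprK.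
  by apply: Scl.
pose pi x := proj1_sig (cid (dec x)).
have piW x : W0 (pi x) by rewrite /pi; case: (cid (dec x)) => w [].
have piS x : S (x - pi x) by rewrite /pi; case: (cid (dec x)) => w [].
have uniq x w1 w2 : W0 w1 -> S (x - w1) -> W0 w2 -> S (x - w2) -> w1 = w2.
  move=> h1 s1 h2 s2; apply/eqP; rewrite -subr_eq0; apply/eqP; apply: W0S.
    by rewrite addrC -scaleN1r; apply: W0cl.
  have -> : w1 - w2 = (-1) *: (x - w1) + (x - w2).
    by rewrite scaleN1r opprB addrA subrK.
  exact: Scl.
exists pi; split; last split.
- move=> c u v; apply/esym/(uniq (c *: u + v)) => //.
    exact: W0cl.
  have -> : c *: u + v - (c *: pi u + pi v) = c *: (u - pi u) + (v - pi v).
    by rewrite scalerBr opprD !addrA; congr (_ + _); rewrite addrAC.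
  exact: Scl.
- move=> s Ss; apply/esym/(uniq s) => //; first by right.
  by rewrite subr0.
- exact: piS.
Qed.


Lemma lin0 (K : fieldType) (U V : lmodType K) (f : U -> V) : lin f -> f 0 = 0.
Proof.
move=> h; have := h 1 0 0; rewrite scaler0 addr0 scale1r => H.
by apply: (@addrI _ (f 0)); rewrite addr0 -H.
Qed.

Lemma linD (K : fieldType) (U V : lmodType K) (f : U -> V) x y : lin f -> f (x + y) = f x + f y.
Proof. by move=> h; have := h 1 x y; rewrite !scale1r. Qed.

Lemma linN (K : fieldType) (U V : lmodType K) (f : U -> V) x : lin f -> f (- x) = - f x.
Proof. by move=> h; have := h (-1) x 0; rewrite addr0 (lin0 h) addr0 !scaleN1r. Qed.

Lemma linZ (K : fieldType) (U V : lmodType K) (f : U -> V) c x : lin f -> f (c *: x) = c *: f x.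
Proof. by move=> h; have := h c x 0; rewrite addr0 (lin0 h) addr0. Qed.

Lemma linB (K : fieldType) (U V : lmodType K) (f : U -> V) x y : lin f -> f (x - y) = f x - f y.
Proof. by move=> h; rewrite (linD _ _ h) (linN _ h). Qed.

Lemma lin_add (K : fieldType) (U V : lmodType K) (f g : U -> V) :
  lin f -> lin g -> lin (fun u => f u + g u).
Proof. by move=> hf hg c u v; rewrite hf hg scalerDr addrACA. Qed.

Lemma lin_opp (K : fieldType) (U V : lmodType K) (f : U -> V) :
  lin f -> lin (fun u => - f u).
Proof. by move=> hf c u v; rewrite hf opprD scalerN. Qed.

Lemma lin_sub (K : fieldType) (U V : lmodType K) (f g : U -> V) :
  lin f -> lin g -> lin (fun u => f u - g u).
Proof. by move=> hf hg; apply: lin_add => //; apply: lin_opp. Qed.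

Lemma lin_comp (K : fieldType) (U V W : lmodType K) (f : V -> W) (g : U -> V) :
  lin f -> lin g -> lin (fun u => f (g u)).
Proof. by move=> hf hg c u v; rewrite hg hf. Qed.

Lemma half (K : fieldType) (V : lmodType K) (s : V) : (2%:R : K) != 0 -> s *+ 2 = 0 -> s = 0.
Proof.
move=> h2 hs; rewrite -[s]scale1r -(mulVf h2) -scalerA scaler_nat hs.
by rewrite scaler0.
Qed.

Lemma grpA (z : zmodType) (p bQ mQ bR mR : z) :
  p + (- bQ + mQ) + (bR + mR) = 0 -> - p - (- bR + mR) - (bQ + mQ) = 0 -> (bR - bQ) *+ 2 = 0.
Proof.
move=> H1 H2; rewrite -[RHS](addr0 0) -{1}H1 -H2.
rewrite mulr2n !opprD !opprK !addrA.
rewrite [RHS](ACl (4*2*7*9*(1*6)*(3*10)*(5*8)))/=.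
by rewrite !subrr !addr0.
Qed.
Lemma grpB (z : zmodType) (cP gP bQ gQ hQ gR hR cQ : z) :
  cP + gP + (-bQ + (gQ + hQ)) + (bQ + (gR + hR)) = 0 -> cP + gP + (-cQ + gQ) + (cQ + gR) = 0 -> hQ + hR = 0.
Proof.
move=> H1 H2; rewrite -[RHS](subrr 0) -{1}H1 -H2.
rewrite !opprD !opprK !addrA.
rewrite [RHS](ACl (5*8*(1*9)*(2*10)*(6*3)*(4*12)*(7*14)*(11*13)))/=.
by rewrite !subrr !addr0.
Qed.
Lemma grpC (z : zmodType) (p q r : z) : q + r = 0 -> r + p = 0 -> p + q = 0 -> p *+ 2 = 0.
Proof.
move=> H1 H2 H3; rewrite -[RHS](subrr 0) -{1}(addr0 0) -{1}H2 -{1}H3 -H1.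
rewrite mulr2n !opprD !addrA.
rewrite [RHS](ACl (2*3*(4*5)*(1*6)))/=.
by rewrite !subrr !addr0.
Qed.
Lemma grpD (z : zmodType) (b1 g1 b2 g2 b3 g3 c : z) :
  b1 + g1 + (b2 + g2) + (b3 + g3) = 0 -> c + g1 + (-c + g2) + (c + g3) = 0 -> b1 + b2 + b3 - c = 0.
Proof.
move=> H1 H2; rewrite -[RHS](subrr 0) -{1}H1 -H2.
rewrite !opprD !opprK !addrA.
rewrite [RHS](ACl (1*3*5*7*(2*8)*(4*10)*(6*12)*(9*11)))/=.
by rewrite !subrr !addr0.
Qed.
Lemma grpE (z : zmodType) (p1 q1 p2 q2 p3 q3 p4 q4 : z) :
 (p1 - q1) + (p2 - q2) + (p3 - q3) - (p4 - q4) = (p1+p2+p3-p4) - (q1+q2+q3-q4).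
Proof.
rewrite !opprD !opprK !addrA.
by rewrite [LHS](ACl (1*3*5*7*2*4*6*8))/=.
Qed.

Unset Implicit Arguments.
Theorem corollary3p5 (K : fieldType) (A : comAlgType K) (k z : lmodType K)
  (br : k -> k -> k)
  (G1 : A -> A -> k -> k -> z) (G2 : A -> k -> k -> z) (H3 : A -> A -> k -> k -> z) :
  (2%:R : K) != 0 ->
  is_lie_bracket br ->
  LS_map G1 -> AL_map G2 -> SL_map H3 ->
  is_cocycle br (fval G1 G2 H3) ->
  exists G10 G11 : A -> A -> k -> k -> z,
    LS_map G10 /\ LS_map G11 /\
        (forall a b x y, G1 a b x y = G10 a b x y + G11 a b x y) /\
        (forall a b x u v, G10 a b x (br u v) = 0) /\
        (forall a b, invariant_form br (G11 a b)) /\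
        (forall (a b c : A) x y,
           G11 (a * b) c x y + G11 (b * c) a x y + G11 (c * a) b x y
           - G11 (a * b * c) 1 x y = 0).
Proof.
move=> h2 hbr hG1 hG2 hH3 hc; move: hbr hG1 hG2 hH3.
rewrite /is_lie_bracket /LS_map /AL_map /SL_map /multilin4.
move=> [brl brr brxx jac] [[G1a G1b G1x G1y] G1alt G1sym] [G2a G2x G2y G2alt]
  [[H3a H3b H3x H3y] H3sym H3alt].
have brN x y : br y x = - br x y.
  have brDl u v w : br (u + v) w = br u w + br v w by exact: (linD _ _ (brl w)).
  have brDr u v w : br w (u + v) = br w u + br w v by exact: (linD _ _ (brr w)).
  have := brxx (x + y); rewrite brDl !brDr !brxx add0r addr0 => /eqP.
  by rewrite addrC addr_eq0 => /eqP.
have G1N3 a b X Y : G1 a b (- X) Y = - G1 a b X Y by exact: (linN _ (G1x a b Y)).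
have G103 a b Y : G1 a b 0 Y = 0 by exact: (lin0 (G1x a b Y)).
have G104 a b X : G1 a b X 0 = 0 by exact: (lin0 (G1y a b X)).
have G1anti a b X Y : G1 b a X Y = - G1 a b X Y.
  have G1Da u v w : G1 (u + v) w X Y = G1 u w X Y + G1 v w X Y by exact: (linD _ _ (G1a w X Y)).
  have G1Db u v w : G1 w (u + v) X Y = G1 w u X Y + G1 w v X Y by exact: (linD _ _ (G1b w X Y)).
  have := G1alt (a + b) X Y; rewrite G1Da !G1Db !G1alt add0r addr0 => /eqP.
  by rewrite addrC addr_eq0 => /eqP.
have PhiN a b X Y : fval G1 G2 H3 a b (- X) Y = - fval G1 G2 H3 a b X Y.
  rewrite /fval G1N3 (linN _ (G2x (a * b) Y)) (linN _ (H3x a b Y)) (linN _ (H3x (a * b) 1 Y)).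
  by rewrite !opprD !opprK.
pose m a b X Y := G2 (a * b) X Y + (H3 a b X Y - H3 (a * b) 1 X Y).
have Phi_e a b X Y : fval G1 G2 H3 a b X Y = G1 a b X Y + m a b X Y by rewrite /fval -addrA.
have Phi_sw a b X Y : fval G1 G2 H3 b a X Y = - G1 a b X Y + m a b X Y.
  by rewrite /fval G1anti mulrC H3sym -addrA.
have Phi_1 d X Y : fval G1 G2 H3 d 1 X Y = G1 d 1 X Y + G2 d X Y.
  by rewrite /fval mulr1 subrr addr0.
have Phi_1' d X Y : fval G1 G2 H3 1 d X Y = - G1 d 1 X Y + G2 d X Y.
  by rewrite /fval G1anti mul1r H3sym subrr addr0.
have StA a b x y w : G1 a b (br w x) y = G1 a b (br y w) x.
  have e1 := hc a b 1 x y w; have e2 := hc a b 1 y x w.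
  rewrite !mulr1 !mul1r in e1 e2.
  rewrite (brN x y) (brN w x) (brN y w) !PhiN in e2.
  rewrite !(Phi_sw a b) !(Phi_e a b) in e1 e2.
  apply/eqP; rewrite -subr_eq0; apply/eqP; apply: (half h2).
  by apply: grpA e2; rewrite /m.
have StB0 a b x y w : (H3 a b (br y w) x - H3 (a * b) 1 (br y w) x)
    + (H3 a b (br w x) y - H3 (a * b) 1 (br w x) y) = 0.
  have e1 := hc a b 1 x y w; have e3 := hc (a * b) 1 1 x y w.
  rewrite !mulr1 !mul1r in e1 e3.
  rewrite Phi_1 (Phi_sw a b) (Phi_e a b) (StA a b x y w) /m in e1.
  rewrite !Phi_1 Phi_1' (StA (a * b) 1 x y w) in e3.
  exact: grpB e1 e3.
have StB a b x y w : H3 a b (br x y) w = H3 (a * b) 1 (br x y) w.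
  apply/eqP; rewrite -subr_eq0; apply/eqP; apply: (half h2).
  exact: (grpC (StB0 a b x y w) (StB0 a b y w x) (StB0 a b w x y)).
have PhiB p q x y Y : fval G1 G2 H3 p q (br x y) Y = G1 p q (br x y) Y + G2 (p * q) (br x y) Y.
  by rewrite /fval StB subrr addr0.
have StC a b c x y w : G1 (a * b) c (br x y) w + G1 (b * c) a (br x y) w
    + G1 (c * a) b (br x y) w - G1 (a * b * c) 1 (br x y) w = 0.
  have e := hc a b c x y w; have e' := hc (a * b * c) 1 1 x y w.
  have m1 : b * c * a = a * b * c by rewrite mulrC mulrA.
  have m2 : c * a * b = a * b * c by rewrite -m1 mulrC mulrA.
  rewrite !PhiB m1 m2 in e.
  rewrite -(StA (b * c) a x y w) -(StA (b * c) a y w x) -(StA (c * a) b y w x) in e.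
  rewrite !PhiB !mulr1 !mul1r (G1anti (a * b * c) 1) in e'.
  rewrite -(StA (a * b * c) 1 x y w) -(StA (a * b * c) 1 y w x) in e'.
  exact: grpD e e'.
pose spanB (s : k) := forall P : k -> Prop,
  (forall c s t, P s -> P t -> P (c *: s + t)) -> P 0 -> (forall u v, P (br u v)) -> P s.
have [pi [pil [pi0 piS]]] : exists pi : k -> k, lin pi /\ (forall s, spanB s -> pi s = 0)
    /\ (forall x, spanB (x - pi x)).
  apply: complement.
    rewrite /spanB => c s t Hs Ht P Pcl P0 Pb; apply: (Pcl); [exact: (Hs P Pcl P0 Pb) | exact: (Ht P Pcl P0 Pb)].
  by rewrite /spanB => P _ P0 _.
have pibr u v : pi (br u v) = 0 by apply: pi0; rewrite /spanB => P _ _ Pb; exact: Pb.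
pose Dfun a b c X Y := G1 (a * b) c X Y + G1 (b * c) a X Y + G1 (c * a) b X Y - G1 (a * b * c) 1 X Y.
have Dlin a b c Y : lin (fun X => Dfun a b c X Y).
  rewrite /Dfun; apply: lin_sub; last exact: G1x.
  apply: lin_add; last exact: G1x.
  by apply: lin_add; exact: G1x.
have Dspan a b c s Y : spanB s -> Dfun a b c s Y = 0.
  rewrite /spanB => Hs; apply: (Hs (fun s => Dfun a b c s Y = 0)).
  - by move=> c' s' t' h1 h3; have /= -> := Dlin a b c Y c' s' t'; rewrite h1 h3 scaler0 addr0.
  - exact: (lin0 (Dlin a b c Y)).
  - by move=> u v; exact: StC.
have Dsym a b c X Y : Dfun a b c X Y = Dfun a b c Y X.
  by rewrite /Dfun !(G1sym _ _ X).
have Dpi a b c X Y : Dfun a b c X Y = Dfun a b c (pi X) Y.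
  have /= := linD (X - pi X) (pi X) (Dlin a b c Y).
  by rewrite subrK => ->; rewrite Dspan // add0r.
exists (fun a b x y => G1 a b (pi x) (pi y)), (fun a b x y => G1 a b x y - G1 a b (pi x) (pi y)).
split; last split; last split; last split; last split.
- split; [split | |].
  + by move=> b x y; exact: G1a.
  + by move=> a x y; exact: G1b.
  + by move=> a b y; exact: (lin_comp (G1x a b (pi y)) pil).
  + by move=> a b x; exact: (lin_comp (G1y a b (pi x)) pil).
  + by move=> a x y; exact: G1alt.
  + by move=> a b x y; exact: G1sym.
- split; [split | |].
  + by move=> b x y; apply: lin_sub; exact: G1a.
  + by move=> a x y; apply: lin_sub; exact: G1b.
  + by move=> a b y; apply: lin_sub; [exact: G1x | exact: (lin_comp (G1x a b (pi y)) pil)].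
  + by move=> a b x; apply: lin_sub; [exact: G1y | exact: (lin_comp (G1y a b (pi x)) pil)].
  + by move=> a x y /=; rewrite !G1alt subrr.
  + by move=> a b x y /=; rewrite G1sym (G1sym a b (pi x)).
- by move=> a b x y /=; rewrite addrC subrK.
- by move=> a b x u v /=; rewrite pibr G104.
- move=> a b w x y /=.
  rewrite !pibr G103 G104 !subr0 (G1sym a b x) StA (brN w y) G1N3.
  by rewrite addNr.
- move=> a b c x y /=.
  rewrite grpE.
  change (Dfun a b c x y - Dfun a b c (pi x) (pi y) = 0).
  by rewrite Dpi Dsym Dpi Dsym subrr.
Qed.
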